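(* Let $C_{sp}(E)$ be as in the context, let $\Delta_n\ge0$ be constants and $c_n$ bounded functions, $n\in\mathbb{N}_0$, and let $T_n:C_{sp}(E)\to C_{sp}(E)$ be operators such that (i) $\|T_nv_1-T_nv_2\|_{sp}\le\Delta_n\|v_1-v_2\|_{sp}$ for all $v_1,v_2\in C_{sp}(E)$; (ii) $\|T_n0\|_{sp}\le\|c_n\|_{sp}$; (iii) for each $n$, $\lim_{k\to\infty}\Delta_n\Delta_{n+1}\cdots\Delta_{n+k}=0$; (iv) $R_n:=\|c_n\|_{sp}+\sum_{i=0}^\infty\Delta_n\cdots\Delta_{n+i}\|c_{n+i+1}\|_{sp}<\infty$ for each $n$. Then there is a sequence $w_n\in C_{sp}(E)$ with $\|T_nw_{n+1}-w_n\|_{sp}=0$ for $n=0,1,\ldots$. Moreover $\|w_n\|_{sp}\le R_n$ and for all $n$ and $k\ge1$ $$\|T_nT_{n+1}\cdots T_{n+k-1}0-w_n\|_{sp}\le\Delta_n\cdots\Delta_{n+k-1}\|w_{n+k}\|_{sp}.$$ Furthermore, when $\sup_n\|w_n\|_{sp}<\infty$, the $w_n$ are unique up to an additive constant, in the sense that any sequence $\tilde w_n\in C_{sp}(E)$ with $\|T_n\tilde w_{n+1}-\tilde w_n\|_{sp}=0$ for all $n$ and $\sup_n\|\tilde w_n\|_{sp}<\infty$ satisfies $\|\tilde w_n-w_n\|_{sp}=0$ for all $n$.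
   Context: $E$ is a complete separable metric space, $U$ a set, $C(E)$ the bounded continuous real functions on $E$. The span seminorm is $\|v\|_{sp}=\sup_{x,x'\in E}(v(x)-v(x'))$; $C_{sp}(E)$ is the quotient of $C(E)$ by the relation $v_1\equiv v_2$ iff $\|v_1-v_2\|_{sp}=0$ (i.e. modulo constants), normed by $\|\cdot\|_{sp}$. For a bounded $c_n:E\times U\to\mathbb{R}$, $\|c_n\|_{sp}=\sup_{x,x'\in E}\sup_{a,a'\in U}(c_n(x,a)-c_n(x',a'))$. *)

(* Defs.v *)
From HB Require Import structures.
From mathcomp Require Import all_boot all_order all_algebra.
From mathcomp Require Import all_classical all_reals all_analysis.
Set Implicit Arguments. Unset Strict Implicit. Unset Printing Implicit Defensive.
Import Order.TTheory GRing.Theory Num.Theory numFieldNormedType.Exports.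
Local Open Scope classical_set_scope.
Local Open Scope ring_scope.

Definition separable_sp (T : topologicalType) : Prop :=
  exists D : set T, countable D /\ closure D = setT.

Definition inCb (R : realType) (E : topologicalType) (v : E -> R) : Prop :=
  continuous v /\ exists M : R, forall x, `|v x| <= M.

Definition spn (R : realType) (E : Type) (v : E -> R) : R :=
  sup [set v x - v x' | x in [set: E] & x' in [set: E]].

Definition spc (R : realType) (E U : Type) (c : E -> U -> R) : R :=
  sup [set c p.1.1 p.2.1 - c p.1.2 p.2.2 | p in [set: (E * E) * (U * U)]].

Definition dprod (R : realType) (Delta : nat -> R) (n k : nat) : R :=
  \prod_(n <= j < n + k) Delta j.

Fixpoint iterT (R : realType) (E : Type) (T : nat -> (E -> R) -> (E -> R))
  (n k : nat) (v : E -> R) : E -> R :=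
  match k with
  | 0 => v
  | k'.+1 => T n (iterT T n.+1 k' v)
  end.

(* Main.v *)
Require Import Defs.
From HB Require Import structures.
From mathcomp Require Import all_boot all_order all_algebra.
From mathcomp Require Import all_classical all_reals all_analysis.
From mathcomp Require Import ring lra.
Import Order.TTheory GRing.Theory Num.Theory numFieldNormedType.Exports.
Local Open Scope classical_set_scope.
Local Open Scope ring_scope.
Set Implicit Arguments. Unset Strict Implicit.


Section Spn.
Variables (R : realType) (E : Type).
Definition bnd (f : E -> R) := exists M : R, forall x, `|f x| <= M.

Lemma spn_ub (f : E -> R) x x' : bnd f -> f x - f x' <= spn f.
Proof.
move=> [M hM]; apply: ub_le_sup; last by exists x => //; exists x'.
exists (M + M) => _ [y _ [y' _ <-]].
by rewrite (le_trans (ler_norm _)) // (le_trans (ler_normB _ _)) // lerD.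
Qed.

Lemma spn_le (f : E -> R) B : 0 <= B -> (forall x x', f x - f x' <= B) -> spn f <= B.
Proof.
move=> B0 hB; have [[x _]|ne] := pselect (exists x : E, True).
  apply: ge_sup; first by exists (f x - f x); exists x => //; exists x.
  by move=> _ [y _ [y' _ <-]].
rewrite /spn.
suff -> : [set f x - f x' | x in [set: E] & x' in [set: E]] = set0 by rewrite sup0.
by apply/seteqP; split => // r [x]; case: ne; exists x.
Qed.
End Spn.


Section Spn2.
Variables (R : realType) (E : Type).
Implicit Types f g h : E -> R.

Lemma bndB f g : bnd f -> bnd g -> bnd (f \- g).
Proof.
move=> [M hM] [N hN]; exists (M + N) => x /=.
by rewrite (le_trans (ler_normB _ _)) // lerD.
Qed.

Lemma bnd0 : bnd (fun _ : E => (0:R)).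
Proof. by exists 0 => x; rewrite normr0. Qed.

Lemma spn_ge0 f : bnd f -> 0 <= spn f.
Proof.
move=> bf; have [[x _]|ne] := pselect (exists x : E, True).
  by rewrite (le_trans _ (spn_ub x x bf)) // subrr.
rewrite /spn.
suff -> : [set f x - f x' | x in [set: E] & x' in [set: E]] = set0 by rewrite sup0.
by apply/seteqP; split => // r [x]; case: ne; exists x.
Qed.

Lemma spn_tri f g h : bnd f -> bnd g -> bnd h ->
  spn (f \- h) <= spn (f \- g) + spn (g \- h).
Proof.
move=> bf bg bh; apply: spn_le.
  by rewrite addr_ge0 // spn_ge0 //; apply: bndB.
move=> x x'; rewrite /=.
have := spn_ub x x' (bndB bf bg); have := spn_ub x x' (bndB bg bh) => /=.
move=> h1 h2; rewrite (le_trans _ (lerD h2 h1)) //.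
by rewrite le_eqVlt; apply/orP; left; apply/eqP; ring.
Qed.

Lemma spn_sym f g : bnd f -> bnd g -> spn (f \- g) = spn (g \- f).
Proof.
move=> bf bg; apply/le_anti/andP; split; apply: spn_le;
  try (by apply: spn_ge0; apply: bndB); move=> x x' /=.
- by rewrite (le_trans _ (spn_ub x' x (bndB bg bf))) //= ; rewrite le_eqVlt; apply/orP; left; apply/eqP; ring.
- by rewrite (le_trans _ (spn_ub x' x (bndB bf bg))) //= ; rewrite le_eqVlt; apply/orP; left; apply/eqP; ring.
Qed.

Lemma spn_Ble f g : bnd f -> bnd g -> spn (f \- g) <= spn f + spn g.
Proof.
move=> bf bg; apply: spn_le; first by rewrite addr_ge0 // spn_ge0.
move=> x x' /=; rewrite (le_trans _ (lerD (spn_ub x x' bf) (spn_ub x' x bg))) //.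
by rewrite le_eqVlt; apply/orP; left; apply/eqP; ring.
Qed.

Lemma spn0B f : bnd f -> spn ((fun _ => 0) \- f) <= spn f.
Proof.
move=> bf; apply: spn_le; first by rewrite spn_ge0.
move=> x x' /=; rewrite (le_trans _ (spn_ub x' x bf)) //; rewrite le_eqVlt; apply/orP; left; apply/eqP; ring.
Qed.

Lemma spn_unif f g e : 0 <= e -> (forall x, `|f x - g x| <= e) -> spn (f \- g) <= e + e.
Proof.
move=> e0 h; apply: spn_le; first by rewrite addr_ge0.
move=> x x' /=; have := h x; have := h x'.
rewrite !ler_norml => /andP[a1 a2] /andP[b1 b2].
lra.
Qed.

Lemma spn_cst f g : (forall x x', f x - g x = f x' - g x') -> spn (f \- g) <= 0.
Proof.
by move=> h; apply: spn_le => // x x' /=; rewrite (h x x') subrr.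
Qed.

Lemma le0_cvg (x : R) (a : R^nat) : (forall k, x <= a k) -> a @ \oo --> 0 -> x <= 0.
Proof.
move=> h a0; apply: (cvgr_to_ge a0); exact: nearW.
Qed.
End Spn2.


Section Main.
Variables (R : realType) (E : topologicalType) (U : Type).
Variables (Delta : nat -> R) (c : nat -> E -> U -> R) (T : nat -> (E -> R) -> (E -> R)).
Hypothesis hDelta : forall n, 0 <= Delta n.
Hypothesis hc : forall n, exists M : R, forall x a, `|c n x a| <= M.
Hypothesis hT : forall n v, inCb v -> inCb (T n v).
Hypothesis h1 : forall n v1 v2, inCb v1 -> inCb v2 ->
          spn (T n v1 \- T n v2) <= Delta n * spn (v1 \- v2).
Hypothesis h2 : forall n, spn (T n (fun _ => 0)) <= spc (c n).
Hypothesis h4 : forall n, cvgn (series (fun i => dprod Delta n i.+1 * spc (c (n + i.+1)%N))).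

Lemma inCb_bnd (v : E -> R) : inCb v -> bnd v.
Proof. by case. Qed.

Lemma inCb0 : inCb (fun _ : E => (0:R)).
Proof. split; [exact: cst_continuous | exists 0 => x; rewrite normr0 //]. Qed.

Lemma inCb_iter v : inCb v -> forall n k, inCb (iterT T n k v).
Proof. by move=> hv n k; elim: k n => [|k IH] n //=; apply: hT. Qed.

Lemma spc_ge0 n : 0 <= spc (c n).
Proof.
have [[p _]|ne] := pselect (exists p : (E * E) * (U * U), True).
  have [M hM] := hc n.
  apply: (@le_trans _ _ (c n p.1.1 p.2.1 - c n p.1.1 p.2.1)); first by rewrite subrr.
  apply: ub_le_sup; last by exists ((p.1.1, p.1.1), (p.2.1, p.2.1)).
  exists (M + M) => _ [q _ <-].
  by rewrite (le_trans (ler_norm _)) // (le_trans (ler_normB _ _)) // lerD.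
rewrite /spc.
suff -> : [set c n p.1.1 p.2.1 - c n p.1.2 p.2.2 | p in [set: (E * E) * (U * U)]] = set0
  by rewrite sup0.
by apply/seteqP; split => // r [p]; case: ne; exists p.
Qed.

Lemma dprod0 n : dprod Delta n 0 = 1.
Proof. by rewrite /dprod addn0 big_geq. Qed.

Lemma dprodS n k : dprod Delta n k.+1 = Delta n * dprod Delta n.+1 k.
Proof. by rewrite /dprod big_ltn ?addnS ?ltnS ?leq_addr // addSn. Qed.

Lemma dprod_ge0 n k : 0 <= dprod Delta n k.
Proof. by rewrite /dprod; apply: prodr_ge0 => i _. Qed.

Definition u n k := iterT T n k (fun _ => 0).
Definition b n j := dprod Delta n j * spc (c (n + j)%N).

Lemma b_ge0 n j : 0 <= b n j.
Proof. by rewrite mulr_ge0 ?dprod_ge0 ?spc_ge0. Qed.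

Lemma inCb_u n k : inCb (u n k).
Proof. exact/inCb_iter/inCb0. Qed.

Lemma bnd_u n k : bnd (u n k).
Proof. exact/inCb_bnd/inCb_u. Qed.

Lemma diff_le n k : spn (u n k.+1 \- u n k) <= b n k.
Proof.
elim: k n => [|k IH] n.
  rewrite /b dprod0 mul1r addn0 /u /=.
  apply: le_trans (spn_Ble _ _) _; [exact/inCb_bnd/hT/inCb0 | exact: bnd0 |].
  have : spn (fun _ : E => (0:R)) <= 0.
    have := @spn_cst R E (fun _ => 0) (fun _ => 0).
    by rewrite (_ : (fun _ : E => (0:R)) \- (fun _ => 0) = (fun _ => 0)) //;
      [apply; move=> *; rewrite subrr | apply/funext => x /=; rewrite subrr].
  by move=> h; rewrite (le_trans (lerD (h2 n) h)) // addr0.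
have := h1 n (inCb_u n.+1 k.+1) (inCb_u n.+1 k).
move/le_trans; apply.
rewrite /b dprodS -mulrA ler_wpM2l // -addSnnS.
exact: IH.
Qed.

Definition h4t n := (fun i => dprod Delta n i.+1 * spc (c (n + i.+1)%N)).

Lemma seriesb_S n k : series (b n) k.+1 = spc (c n) + series (h4t n) k.
Proof. by rewrite /series /= big_nat_recl // /b dprod0 mul1r addn0. Qed.

Lemma cvg_b n : series (b n) @ \oo --> spc (c n) + limn (series (h4t n)).
Proof.
rewrite -cvg_shiftS.
rewrite (_ : [sequence series (b n) k.+1]_k = fun k => spc (c n) + series (h4t n) k);
  last by apply/funext => k; rewrite /= seriesb_S.
apply: cvgD; [exact: cvg_cst | exact: h4].
Qed.

Definition S n := limn (series (b n)).

Lemma S_eq n : S n = spc (c n) + limn (series (h4t n)).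
Proof. exact/cvg_lim/cvg_b. Qed.

Lemma cvgS n : cvgn (series (b n)).
Proof. by apply/cvg_ex; eexists; exact: cvg_b. Qed.

Lemma seriesb_le n k : series (b n) k <= S n.
Proof.
apply: nondecreasing_cvgn_le; last exact: cvgS.
by apply: nondecreasing_series => *; exact: b_ge0.
Qed.

Lemma S_ge0 n : 0 <= S n.
Proof. by apply: le_trans (seriesb_le n 0); rewrite /series /= big_geq. Qed.

Definition tail n k := S n - series (b n) k.

Lemma tail_ge0 n k : 0 <= tail n k.
Proof. by rewrite subr_ge0 seriesb_le. Qed.

Lemma cvg_tail n : tail n @ \oo --> 0.
Proof.
rewrite -(subrr (S n)); apply: cvgB; [exact: cvg_cst | exact: cvgS].
Qed.

Section Pt.
Variable x0 : E.

Definition t n x j := (u n j.+1 x - u n j x) - (u n j.+1 x0 - u n j x0).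
Definition ut n k := fun y => u n k y - u n k x0.

Lemma t_le n x j : `|t n x j| <= b n j.
Proof.
have bd := bndB (bnd_u n j.+1) (bnd_u n j).
have h1' := spn_ub x x0 bd; have h2' := spn_ub x0 x bd.
have := diff_le n j; move: h1' h2' => /=; rewrite /t ler_norml => p q r.
apply/andP; split; lra.
Qed.

Lemma series_t n x k : series (t n x) k = ut n k x.
Proof.
elim: k => [|k IH]; first by rewrite /series /= big_geq // /ut /u /= subrr.
by rewrite seriesSr IH /ut /t; ring.
Qed.

Lemma cvg_t n x : cvgn (series (t n x)).
Proof.
apply: normed_cvg; apply: (@series_le_cvg _ _ (b n)) => j.
- exact: normr_ge0.
- exact: b_ge0.
- exact: t_le.
- exact: cvgS.
Qed.

Lemma series_t_diff n x k m : (k <= m)%N ->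
  `|series (t n x) m - series (t n x) k| <= series (b n) m - series (b n) k.
Proof.
move=> /subnKC <-; elim: (m - k)%N => [|i IH].
  by rewrite addn0 !subrr normr0.
rewrite addnS !seriesSr.
move: IH (t_le n x (k + i)%N); rewrite !ler_norml => /andP[p1 p2] /andP[q1 q2].
apply/andP; split; lra.
Qed.

Definition w n x := limn (series (t n x)).

Lemma w_near n x k : `|w n x - ut n k x| <= tail n k.
Proof.
rewrite -series_t.
have A : (fun m => `|series (t n x) m - series (t n x) k|) @ \oo --> `|w n x - series (t n x) k|.
  apply: cvg_norm; apply: cvgB; [exact: cvg_t | exact: cvg_cst].
have B : (fun m => series (b n) m - series (b n) k) @ \oo --> tail n k.
  apply: cvgB; [exact: cvgS | exact: cvg_cst].
apply: (ler_cvg_to A B).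
near=> m; apply: series_t_diff; near: m; exact: nbhs_infty_ge.
Unshelve. all: by end_near.
Qed.

Lemma inCb_ut n k : inCb (ut n k).
Proof.
have [cu [M hM]] := inCb_u n k; split.
  move=> y; apply: cvgB; [exact: cu | exact: cvg_cst].
exists (M + M) => y; rewrite /ut.
by rewrite (le_trans (ler_normB _ _)) // lerD.
Qed.

Lemma inCb_w n : inCb (w n).
Proof.
split.
  move=> x; apply/cvgrPdist_lt => e e0.
  have e3 : 0 < e / 3%:R by rewrite divr_gt0.
  have [N _ hN] := (cvgrPdist_lt _ _).1 (cvg_tail n) _ e3.
  have := hN N (leqnn N); rewrite sub0r normrN ger0_norm ?tail_ge0 // => tN.
  have H := (cvgrPdist_lt _ _).1 ((inCb_u n N).1 x) _ e3.
  have {}H := H (@nbhs_filter E x).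
  apply: (@filterS _ _ (@nbhs_filter E x) _ _ _ H) => y hy.
  have := w_near n x N; have := w_near n y N; move: hy; rewrite /ut.
  rewrite !ltr_norml !ler_norml => /andP[p1 p2] /andP[q1 q2] /andP[r1 r2].
  apply/andP; split; lra.
exists (S n) => x; have := w_near n x 0; rewrite /ut /tail /u /= subrr subr0.
by rewrite /series /= big_geq // subr0.
Qed.

Lemma spn_w n : spn (w n) <= S n.
Proof.
apply: spn_le; first exact: S_ge0.
move=> x x'; rewrite -subr_le0.
apply: (@le0_cvg _ _ (fun k => tail n k + tail n k)); last first.
  by rewrite -(addr0 0); apply: cvgD; exact: cvg_tail.
move=> k; have := w_near n x k; have := w_near n x' k.
have : ut n k x - ut n k x' <= series (b n) k.
  rewrite -!series_t /series /= -sumrB; apply: ler_sum => j _.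
  have := spn_ub x x' (bndB (bnd_u n j.+1) (bnd_u n j)).
  have := diff_le n j; rewrite /t /=; move=> p q; lra.
rewrite /tail !ler_norml => p /andP[q1 q2] /andP[r1 r2]; lra.
Qed.

Lemma rel_w n : spn (T n (w n.+1) \- w n) = 0.
Proof.
have bw := fun m => inCb_bnd (inCb_w m).
have bT := fun v (hv : inCb v) => inCb_bnd (hT n hv).
have but := fun m k => inCb_bnd (inCb_ut m k).
apply/le_anti/andP; split; last by apply: spn_ge0; apply: bndB; [apply: bT; exact: inCb_w | exact: bw].
apply: (@le0_cvg _ _ (fun k => Delta n * (tail n.+1 k + tail n.+1 k) + (tail n k.+1 + tail n k.+1))); last first.
  have A := cvg_tail n.+1.
  have B : [sequence tail n k.+1]_k @ \oo --> (0:R) by rewrite cvg_shiftS; exact: cvg_tail.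
  rewrite [X in _ --> X](_ : _ = Delta n * (0 + 0) + (0 + 0)); last by rewrite !addr0 mulr0.
  apply: cvgD; first (apply: cvgMl_tmp; apply: cvgD; exact: A).
  apply: cvgD; exact: B.
move=> k.
apply: le_trans (spn_tri (g := T n (ut n.+1 k)) _ _ _) _;
  [apply: bT; exact: inCb_w | apply: bT; exact: inCb_ut | exact: bw |].
apply: lerD.
  have := h1 n (inCb_w n.+1) (inCb_ut n.+1 k) => H; apply: (le_trans H).
  apply: ler_wpM2l => //; apply: spn_unif; first exact: tail_ge0.
  by move=> y; exact: w_near.
apply: le_trans (spn_tri (g := T n (u n.+1 k)) _ _ _) _;
  [apply: bT; exact: inCb_ut | apply: bT; exact: inCb_u | exact: bw |].
rewrite -[X in _ <= X]add0r; apply: lerD.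
  have := h1 n (inCb_ut n.+1 k) (inCb_u n.+1 k) => H; apply: (le_trans H).
  rewrite -(mulr0 (Delta n)); apply: ler_wpM2l => //.
  by apply: spn_cst => y y'; rewrite /ut; ring.
apply: le_trans (spn_tri (g := ut n k.+1) _ _ _) _;
  [exact: (bnd_u n k.+1) | exact: but | exact: bw |].
rewrite -[X in _ <= X]add0r; apply: lerD.
  by apply: spn_cst => y y'; rewrite /ut /u /=; ring.
apply: spn_unif; first exact: tail_ge0.
by move=> y; rewrite distrC; exact: w_near.
Qed.
End Pt.
End Main.


Section Gen.
Variables (R : realType) (E : topologicalType).
Variables (Delta : nat -> R) (T : nat -> (E -> R) -> (E -> R)).
Hypothesis hDelta : forall n, 0 <= Delta n.
Hypothesis hT : forall n v, inCb v -> inCb (T n v).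
Hypothesis h1 : forall n v1 v2, inCb v1 -> inCb v2 ->
          spn (T n v1 \- T n v2) <= Delta n * spn (v1 \- v2).
Lemma step (a : nat -> E -> R) (ha : forall n, inCb (a n))
  (hra : forall n, spn (T n (a n.+1) \- a n) = 0) n v : inCb v -> spn (T n v \- a n) <= Delta n * spn (v \- a n.+1).
Proof.
move=> hv.
apply: le_trans (spn_tri (g := T n (a n.+1)) _ _ _) _;
  [exact/inCb_bnd/hT | exact/inCb_bnd/hT | exact/inCb_bnd |].
by rewrite hra addr0; apply: h1.
Qed.

Variable a : nat -> E -> R.
Hypothesis ha : forall n, inCb (a n).
Hypothesis hra : forall n, spn (T n (a n.+1) \- a n) = 0.

Lemma iter_le v : inCb v -> forall k n,
  spn (iterT T n k v \- a n) <= dprod Delta n k * spn (v \- a (n + k)%N).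
Proof.
move=> hv; elim => [|k IH] n; first by rewrite dprod0 mul1r addn0.
rewrite /=; apply: le_trans (step ha hra _ (inCb_iter hT hv _ _)) _.
rewrite dprodS -mulrA ler_wpM2l // -addSnnS; exact: IH.
Qed.

Variable bb : nat -> E -> R.
Hypothesis hb : forall n, inCb (bb n).
Hypothesis hrb : forall n, spn (T n (bb n.+1) \- bb n) = 0.

Lemma two_le k n : spn (a n \- bb n) <= dprod Delta n k * spn (a (n + k)%N \- bb (n + k)%N).
Proof.
elim: k n => [|k IH] n; first by rewrite dprod0 mul1r addn0.
apply: le_trans (spn_tri (g := T n (a n.+1)) _ _ _) _;
  [exact/inCb_bnd | exact/inCb_bnd/hT | exact/inCb_bnd |].
rewrite spn_sym; [|exact/inCb_bnd | exact/inCb_bnd/hT].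
rewrite hra add0r.
apply: le_trans (step hb hrb n (ha _)) _.
rewrite dprodS -mulrA ler_wpM2l // -addSnnS; exact: IH.
Qed.
End Gen.

Lemma spn_empty (R : realType) (E : Type) (f : E -> R) : ~ (exists x : E, True) -> spn f = 0.
Proof.
move=> ne; apply/le_anti/andP; split.
  by apply: spn_le => // x; case: ne; exists x.
by apply: spn_ge0; exists 0 => x; case: ne; exists x.
Qed.

Unset Implicit Arguments. Set Strict Implicit.

Theorem theorem2 (R : realType) (E : completePseudoMetricType R) (U : Type)
  (hE_haus : hausdorff_space E) (hE_sep : separable_sp E)
  (Delta : nat -> R) (c : nat -> E -> U -> R) (T : nat -> (E -> R) -> (E -> R))
  (hDelta : forall n, 0 <= Delta n)
  (hc : forall n, exists M : R, forall x a, `|c n x a| <= M)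
  (hT : forall n v, inCb v -> inCb (T n v))
  (h1 : forall n v1 v2, inCb v1 -> inCb v2 ->
          spn (T n v1 \- T n v2) <= Delta n * spn (v1 \- v2))
  (h2 : forall n, spn (T n (fun _ => 0)) <= spc (c n))
  (h3 : forall n, (fun k => dprod Delta n k.+1) @ \oo --> (0 : R))
  (h4 : forall n, cvgn (series (fun i => dprod Delta n i.+1 * spc (c (n + i.+1)%N)))) :
  exists w : nat -> E -> R,
    (forall n, inCb (w n)) /\
    (forall n, spn (T n (w n.+1) \- w n) = 0) /\
    (forall n, spn (w n) <=
       spc (c n) + limn (series (fun i => dprod Delta n i.+1 * spc (c (n + i.+1)%N)))) /\
    (forall n k, (1 <= k)%N ->
       spn (iterT T n k (fun _ => 0) \- w n) <= dprod Delta n k * spn (w (n + k)%N)) /\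
    ((exists M : R, forall n, spn (w n) <= M) ->
       forall wt : nat -> E -> R, (forall n, inCb (wt n)) ->
         (forall n, spn (T n (wt n.+1) \- wt n) = 0) ->
         (exists M : R, forall n, spn (wt n) <= M) ->
         forall n, spn (wt n \- w n) = 0).
Proof.
have Sge0 : forall n, 0 <= spc (c n) + limn (series (fun i => dprod Delta n i.+1 * spc (c (n + i.+1)%N))).
  by move=> n; have := S_ge0 hDelta hc h4 n; rewrite (S_eq h4 n).
suff [w [hw [hr hs]]] : exists w : nat -> E -> R,
    (forall n, inCb (w n)) /\
    (forall n, spn (T n (w n.+1) \- w n) = 0) /\
    (forall n, spn (w n) <=
       spc (c n) + limn (series (fun i => dprod Delta n i.+1 * spc (c (n + i.+1)%N)))).
  exists w; split => //; split => //; split => //; split.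
    move=> n k _; apply: le_trans (iter_le hDelta hT h1 hw hr (@inCb0 R E) k n) _.
    apply: ler_wpM2l; first exact: dprod_ge0 hDelta _ _.
    exact/spn0B/inCb_bnd.
  move=> [M hM] wt hwt hrt [M' hM'] n; apply/le_anti/andP; split; last first.
    by apply: spn_ge0; apply: bndB; exact: inCb_bnd.
  apply: (@le0_cvg _ _ (fun k => dprod Delta n k.+1 * (M' + M))); last first.
    rewrite [X in _ --> X](_ : _ = 0 * (M' + M)); last by rewrite mul0r.
    exact: cvgMr_tmp.
  move=> k; apply: le_trans (two_le hDelta hT h1 hwt hrt hw hr k.+1 n) _.
  apply: ler_wpM2l; first exact: dprod_ge0 hDelta _ _.
  apply: le_trans (spn_Ble _ _) _; [exact: inCb_bnd | exact: inCb_bnd |].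
  exact: lerD.
have [[x0 _]|ne] := pselect (exists x : E, True).
  exists (w T x0); split; first exact: (inCb_w hDelta hc hT h1 h2 h4).
  split; first exact: (rel_w hDelta hc hT h1 h2 h4).
  move=> n; apply: le_trans (spn_w hDelta hc hT h1 h2 h4 x0 n) _.
  by rewrite (S_eq h4 n).
exists (fun _ _ => 0); split; first by move=> n; exact: inCb0.
split; first by move=> n; rewrite spn_empty.
by move=> n; rewrite spn_empty.
Qed.
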